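(* Let $G$ and $H$ be graphs, each with at least one vertex, on disjoint vertex sets, and let $S_G$ and $S_H$ be MDNSs of $G$ and $H$, respectively. Then: (1) $\tilde\gamma_{gr}^{\times2}(G+H)=\tilde\gamma_{gr}^{\times2}(G)+\tilde\gamma_{gr}^{\times2}(H)$ and $S_G\oplus S_H$ is an MDNS of $G+H$; (2) $\tilde\gamma_{gr}^{\times2}(G\vee H)=\max\{\tilde\gamma_{gr}^{\times2}(G)+a(G),\tilde\gamma_{gr}^{\times2}(H)+a(H)\}$; moreover: (a) if $\tilde\gamma_{gr}^{\times2}(G)+a(G)\ge\tilde\gamma_{gr}^{\times2}(H)+a(H)$ and $a(G)=0$, then $S_G$ is an MDNS of $G\vee H$; (b) if $\tilde\gamma_{gr}^{\times2}(G)+a(G)\ge\tilde\gamma_{gr}^{\times2}(H)+a(H)$ and $a(G)=1$, then for any $h\in V(H)$, $S_G\oplus(h)$ is an MDNS of $G\vee H$; (c) if $\tilde\gamma_{gr}^{\times2}(G)+a(G)<\tilde\gamma_{gr}^{\times2}(H)+a(H)$ and $a(H)=0$, then $S_H$ is an MDNS of $G\vee H$; (d) if $\tilde\gamma_{gr}^{\times2}(G)+a(G)<\tilde\gamma_{gr}^{\times2}(H)+a(H)$ and $a(H)=1$, then for any $g\in V(G)$, $S_H\oplus(g)$ is an MDNS of $G\vee H$.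
   Context: Graphs are finite, simple, undirected; $N[v]$ closed neighborhood. $G+H$ is the disjoint union; $G\vee H$ is the join (disjoint union plus all edges between $V(G)$ and $V(H)$). A sequence of distinct vertices $(v_1,\dots,v_k)$ is a double neighborhood sequence (DNS) if for each $i$ some $w\in N[v_i]$ satisfies $|\{j<i:w\in N[v_j]\}|\le1$; an MDNS is a DNS of maximum length and $\tilde\gamma_{gr}^{\times2}$ is that length. $\oplus$ is concatenation. $a(X)=1$ if $X$ has an isolated vertex, $a(X)=0$ otherwise. *)

(* Defs.v *)
From mathcomp Require Import all_boot.
Set Implicit Arguments. Unset Strict Implicit. Unset Printing Implicit Defensive.

Record sgraph := SGraph {
  vert :> finType;
  adj : rel vert;
  adj_sym : symmetric adj;
  adj_irr : irreflexive adj }.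

Definition cnbhd (G : sgraph) (v : G) : {set G} := [set w | (w == v) || adj v w].

Definition dns_step (G : sgraph) (p : seq G) (v : G) : bool :=
  [exists w, (w \in cnbhd v) && (count (fun u => w \in cnbhd u) p <= 1)].

Definition is_dns (G : sgraph) (s : seq G) : bool :=
  uniq s && [forall i : 'I_(size s), dns_step (take i s) (tnth (in_tuple s) i)].

Definition gdns (G : sgraph) : nat :=
  \max_(k < #|G|.+1 | [exists t : k.-tuple G, is_dns t]) k.

Definition is_mdns (G : sgraph) (s : seq G) : Prop :=
  is_dns s /\ forall t : seq G, is_dns t -> size t <= size s.

Definition a_iso (G : sgraph) : nat := [exists v : G, [forall w : G, ~~ adj v w]].

Definition sum_adj (G H : sgraph) : rel (G + H)%type :=
  fun x y => match x, y with
             | inl a, inl b => adj a b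
             | inr a, inr b => adj a b
             | _, _ => false end.

Lemma sum_adj_sym G H : symmetric (@sum_adj G H).
Proof. by case=> a [] b //=; apply: adj_sym. Qed.
Lemma sum_adj_irr G H : irreflexive (@sum_adj G H).
Proof. by case=> a /=; apply: adj_irr. Qed.
Definition gsum (G H : sgraph) : sgraph := SGraph (@sum_adj_sym G H) (@sum_adj_irr G H).

Definition join_adj (G H : sgraph) : rel (G + H)%type :=
  fun x y => match x, y with
             | inl a, inl b => adj a b
             | inr a, inr b => adj a b
             | _, _ => true end.

Lemma join_adj_sym G H : symmetric (@join_adj G H).
Proof. by case=> a [] b //=; apply: adj_sym. Qed.
Lemma join_adj_irr G H : irreflexive (@join_adj G H).
Proof. by case=> a /=; apply: adj_irr. Qed.
Definition gjoin (G H : sgraph) : sgraph := SGraph (@join_adj_sym G H) (@join_adj_irr G H).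

Definition seqL (G H : sgraph) (s : seq G) : seq (G + H)%type := map inl s.
Definition seqR (G H : sgraph) (s : seq H) : seq (G + H)%type := map inr s.

(* Main.v *)
Require Import Defs.
From mathcomp Require Import all_boot zify.
Set Implicit Arguments. Unset Strict Implicit. Unset Printing Implicit Defensive.

Section Gen.
Variable G : sgraph.

Definition cnt (w : G) (p : seq G) := count (fun u => w \in cnbhd u) p.

Lemma in_cnbhd (v w : G) : (w \in cnbhd v) = (w == v) || adj v w.
Proof. by rewrite inE. Qed.

Lemma forallI (s : seq G) (x0 : G) :
  [forall i : 'I_(size s), dns_step (take i s) (tnth (in_tuple s) i)] =
  all (fun i => dns_step (take i s) (nth x0 s i)) (iota 0 (size s)).
Proof.
apply/forallP/allP => [H i|H i].
  rewrite mem_iota add0n => /= lti.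
  by have := H (Ordinal lti); rewrite (tnth_nth x0).
by rewrite (tnth_nth x0); apply: H; rewrite mem_iota add0n ltn_ord.
Qed.

Lemma is_dns_nil : is_dns ([::] : seq G).
Proof. by rewrite /is_dns /=; apply/forallP => -[]. Qed.

Lemma is_dns_rcons (s : seq G) v :
  is_dns (rcons s v) = [&& is_dns s, v \notin s & dns_step s v].
Proof.
rewrite /is_dns !(forallI _ v) rcons_uniq size_rcons -addn1 iotaD add0n /=.
rewrite all_cat /= andbT.
have -> : all (fun i => dns_step (take i (rcons s v)) (nth v (rcons s v) i)) (iota 0 (size s))
        = all (fun i => dns_step (take i s) (nth v s i)) (iota 0 (size s)).
  apply: eq_in_all => i; rewrite mem_iota add0n /= => lti.
  by rewrite -cats1 takel_cat ?(ltnW lti) // nth_cat lti.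
rewrite -cats1 take_size_cat // nth_cat ltnn subnn /=.
by case: (v \in s); case: (uniq s); case: (all _ _); case: (dns_step s v).
Qed.

Lemma dns_small (p : seq G) v : size p <= 1 -> dns_step p v.
Proof.
move=> hp; apply/existsP; exists v; rewrite in_cnbhd eqxx /=.
by apply: leq_trans (count_size _ _) hp.
Qed.

Lemma dns_size (t : seq G) : is_dns t -> size t <= #|G|.
Proof. case/andP => hu _; rewrite -(card_uniqP hu); apply: max_card. Qed.

Lemma gdns_ub (t : seq G) : is_dns t -> size t <= gdns G.
Proof.
move=> ht; have lt : size t < #|G|.+1 by rewrite ltnS dns_size.
rewrite /gdns; apply: (@leq_bigmax_cond _ _ _ (Ordinal lt)) => /=.
by apply/existsP; exists (in_tuple t).
Qed.

Lemma gdns_ex : exists t : seq G, is_dns t /\ size t = gdns G.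
Proof.
rewrite /gdns.
have hA : 0 < #|[pred k : 'I_(#|G|.+1) | [exists t : k.-tuple G, is_dns t]]|.
  apply/card_gt0P; exists ord0; rewrite inE /=; apply/existsP.
  by exists [tuple]; apply: is_dns_nil.
case: (eq_bigmax_cond (fun k : 'I_(#|G|.+1) => val k) hA) => k; rewrite inE => /existsP [t ht] ->.
by exists t; rewrite size_tuple.
Qed.

Lemma mdnsE (s : seq G) : is_mdns s <-> is_dns s /\ size s = gdns G.
Proof.
split => [[hs hm]|[hs he]]; last by split => // t /gdns_ub; rewrite he.
split => //; apply/eqP; rewrite eqn_leq gdns_ub //=.
by case: gdns_ex => t [ht <-]; apply: hm.
Qed.

Lemma cnt_rcons w (p : seq G) v : cnt w (rcons p v) = cnt w p + (w \in cnbhd v).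
Proof. by rewrite /cnt -cats1 count_cat /= addn0. Qed.

Lemma sat1 (s : seq G) w : is_dns s -> cnt w s <= 1 -> size s + 1 <= gdns G + a_iso G.
Proof.
move=> hs hc.
have hu : uniq s by case/andP: hs.
case: (boolP (w \in s)) => ws.
  case: (boolP [exists x, adj w x]) => [/existsP [x hx]|hno].
    have xs : x \notin s.
      apply/negP => xs.
      have xw : x != w by apply/eqP => e; move: hx; rewrite e adj_irr.
      move: hc; rewrite /cnt ((permP (perm_to_rem ws)) (fun u => w \in cnbhd u)) /= in_cnbhd eqxx /=.
      have : x \in rem w s by rewrite (mem_rem_uniq _ hu) inE xw.
      have : w \in cnbhd x by rewrite in_cnbhd adj_sym hx orbT.
      move=> wx xr.
      have : 0 < count (fun u => w \in cnbhd u) (rem w s).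
        by rewrite -has_count; apply/hasP; exists x.
      lia.
    have h1 : is_dns (rcons s x).
      rewrite is_dns_rcons hs xs /=; apply/existsP; exists w.
      by rewrite in_cnbhd adj_sym hx orbT.
    have := gdns_ub h1; rewrite size_rcons; lia.
  have -> : a_iso G = 1.
    rewrite /a_iso; suff -> : [exists v : G, [forall w0 : G, ~~ adj v w0]] by [].
    apply/existsP; exists w; apply/forallP => x; apply/negP => hx.
    by move/negP: hno; apply; apply/existsP; exists x.
  have := gdns_ub hs; lia.
have h1 : is_dns (rcons s w).
  rewrite is_dns_rcons hs ws /=; apply/existsP; exists w.
  by rewrite in_cnbhd eqxx.
have := gdns_ub h1; rewrite size_rcons; lia.
Qed.

Lemma sat0 (s : seq G) w : is_dns s -> cnt w s = 0 -> size s + 2 <= gdns G + a_iso G.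
Proof.
move=> hs hc.
have ws : w \notin s.
  apply/negP => ws; have : 0 < cnt w s.
    by rewrite -has_count; apply/hasP; exists w => //; rewrite in_cnbhd eqxx.
  by rewrite hc.
have h1 : is_dns (rcons s w).
  rewrite is_dns_rcons hs ws /=; apply/existsP; exists w.
  by rewrite in_cnbhd eqxx /= -/(cnt w s) hc.
have := sat1 (w:=w) h1; rewrite size_rcons cnt_rcons hc in_cnbhd eqxx.
move=> h; have := h isT; lia.
Qed.

Lemma a_iso_le1 : a_iso G <= 1.
Proof. exact: leq_b1. Qed.

End Gen.

Section Iso.
Variables (G G' : sgraph) (f : G -> G') (g : G' -> G).
Hypotheses (fK : cancel f g) (gK : cancel g f) (fadj : forall x y, adj (f x) (f y) = adj x y).

Lemma iso_mem v w : (f w \in cnbhd (f v)) = (w \in cnbhd v).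
Proof. by rewrite !in_cnbhd fadj (inj_eq (can_inj fK)). Qed.

Lemma iso_step (p : seq G) v : dns_step (map f p) (f v) = dns_step p v.
Proof.
apply/existsP/existsP => [[w' hw]|[w hw]].
  exists (g w'); move: hw; rewrite -{1}(gK w') iso_mem count_map.
  have e : count (fun u => g w' \in cnbhd u) p = count (preim f (fun u => w' \in cnbhd u)) p.
    by apply: eq_count => u /=; rewrite -{2}(gK w') iso_mem.
  by rewrite e.
exists (f w); rewrite iso_mem count_map.
have e : count (fun u => w \in cnbhd u) p = count (preim f (fun u => f w \in cnbhd u)) p.
  by apply: eq_count => u /=; rewrite iso_mem.
by rewrite -e.
Qed.

Lemma iso_dns (s : seq G) : is_dns (map f s) = is_dns s.
Proof.
elim/last_ind: s => [|s v IH]; first by rewrite /= !is_dns_nil.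
by rewrite map_rcons !is_dns_rcons IH iso_step (mem_map (can_inj fK)).
Qed.

End Iso.

Definition getl {A B : Type} (x : A + B) : option A := if x is inl a then Some a else None.
Definition getr {A B : Type} (x : A + B) : option B := if x is inr a then Some a else None.
Definition lproj {A B : Type} (s : seq (A + B)) := pmap getl s.
Definition rproj {A B : Type} (s : seq (A + B)) := pmap getr s.
Definition swap {A B : Type} (x : A + B) : B + A := match x with inl a => inr a | inr b => inl b end.

Lemma swapK {A B : Type} : cancel (@swap A B) swap. Proof. by case. Qed.

Lemma lproj_swap {A B : Type} (s : seq (A + B)) : lproj (map swap s) = rproj s.
Proof. elim: s => [|[a|b] s IH] //=; rewrite /lproj /rproj /= in IH *; by rewrite ?IH. Qed.
Lemma rproj_swap {A B : Type} (s : seq (A + B)) : rproj (map swap s) = lproj s.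
Proof. elim: s => [|[a|b] s IH] //=; rewrite /lproj /rproj /= in IH *; by rewrite ?IH. Qed.
Lemma size_proj {A B : Type} (s : seq (A + B)) : size (lproj s) + size (rproj s) = size s.
Proof. elim: s => [|[a|b] s IH] //=; rewrite /lproj /rproj /= in IH *; by rewrite -IH ?addnS. Qed.
Lemma lproj_rcons {A B : Type} (s : seq (A + B)) x :
  lproj (rcons s x) = if x is inl a then rcons (lproj s) a else lproj s.
Proof. by rewrite /lproj -cats1 pmap_cat; case: x => [a|b] /=; rewrite ?cats1 ?cats0. Qed.
Lemma rproj_rcons {A B : Type} (s : seq (A + B)) x :
  rproj (rcons s x) = if x is inr a then rcons (rproj s) a else rproj s.
Proof. by rewrite /rproj -cats1 pmap_cat; case: x => [a|b] /=; rewrite ?cats1 ?cats0. Qed.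
Lemma lproj_mem {A B : eqType} (s : seq (A + B)) a : (inl a \in s) = (a \in lproj s).
Proof. elim: s => [|[a'|b] s IH] //=; rewrite /lproj /= in IH *; by rewrite !inE -?IH. Qed.
Lemma rproj_mem {A B : eqType} (s : seq (A + B)) a : (inr a \in s) = (a \in rproj s).
Proof. elim: s => [|[a'|b] s IH] //=; rewrite /rproj /= in IH *; by rewrite !inE -?IH. Qed.
Lemma lproj_inl {A B : Type} (s : seq A) : lproj (map (@inl A B) s) = s.
Proof. by elim: s => //= a s IH; rewrite /lproj /= -/(lproj _) IH. Qed.
Lemma rproj_inl {A B : Type} (s : seq A) : rproj (map (@inl A B) s) = [::].
Proof. by elim: s. Qed.
Lemma lproj_inr {A B : Type} (s : seq B) : lproj (map (@inr A B) s) = [::].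
Proof. by elim: s. Qed.
Lemma rproj_inr {A B : Type} (s : seq B) : rproj (map (@inr A B) s) = s.
Proof. by elim: s => //= a s IH; rewrite /rproj /= -/(rproj _) IH. Qed.

Section Sum.
Variables G H : sgraph.
Lemma sum_ll (v w : G) : ((inl w : gsum G H) \in cnbhd (inl v : gsum G H)) = (w \in cnbhd v).
Proof. by rewrite (@in_cnbhd (gsum G H)) in_cnbhd. Qed.
Lemma sum_rl (v : G) (w : H) : ((inr w : gsum G H) \in cnbhd (inl v : gsum G H)) = false.
Proof. by rewrite (@in_cnbhd (gsum G H)). Qed.
Lemma sum_lr (v : H) (w : G) : ((inl w : gsum G H) \in cnbhd (inr v : gsum G H)) = false.
Proof. by rewrite (@in_cnbhd (gsum G H)). Qed.

Lemma sum_cntL (w' : G) (p : seq (gsum G H)) :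
  count (fun u : gsum G H => (inl w' : gsum G H) \in cnbhd u) p = cnt w' (lproj p).
Proof.
elim: p => [|[a|b] p IH] //=; rewrite /lproj /= in IH *; rewrite IH //.
- by rewrite sum_ll.
- by rewrite sum_lr.

Qed.

Lemma sum_stepL (p : seq (gsum G H)) (v : G) : dns_step p (inl v : gsum G H) = dns_step (lproj p) v.
Proof.
apply/existsP/existsP => [[[w'|w'] hw]|[w' hw]].
- by exists w'; move: hw; rewrite sum_cntL sum_ll.
- by move: hw; rewrite sum_rl.
- by exists (inl w'); rewrite sum_cntL sum_ll.
Qed.
End Sum.

Lemma sum_swap_adj G H (x y : gsum G H) : @adj (gsum H G) (swap x) (swap y) = adj x y.
Proof. by case: x => a; case: y => b. Qed.

Lemma join_swap_adj G H (x y : gjoin G H) : @adj (gjoin H G) (swap x) (swap y) = adj x y.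
Proof. by case: x => a; case: y => b. Qed.

Lemma sum_stepR G H (p : seq (gsum G H)) (v : H) : dns_step p (inr v : gsum G H) = dns_step (rproj p) v.
Proof.
rewrite -(@iso_step (gsum G H) (gsum H G) swap swap swapK swapK (@sum_swap_adj G H)).
by rewrite sum_stepL lproj_swap.
Qed.

Lemma is_dns_sum G H (S : seq (gsum G H)) : is_dns S = is_dns (lproj S) && is_dns (rproj S).
Proof.
elim/last_ind: S => [|S x IH]; first by rewrite /= !is_dns_nil.
rewrite is_dns_rcons lproj_rcons rproj_rcons IH.
case: x => [a|b]; rewrite !is_dns_rcons.
  rewrite sum_stepL lproj_mem.
  by case: (is_dns (lproj S)) (is_dns (rproj S)) (a \in lproj S) (dns_step (lproj S) a) => [] [] [] [].
rewrite (@sum_stepR G H S b) rproj_mem.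
by case: (is_dns (lproj S)) (is_dns (rproj S)) (b \in rproj S) (dns_step (rproj S) b) => [] [] [] [].
Qed.

Section Join.
Variables G H : sgraph.
Lemma join_ll (v w : G) : ((inl w : gjoin G H) \in cnbhd (inl v : gjoin G H)) = (w \in cnbhd v).
Proof. by rewrite (@in_cnbhd (gjoin G H)) in_cnbhd. Qed.
Lemma join_rr (v w : H) : ((inr w : gjoin G H) \in cnbhd (inr v : gjoin G H)) = (w \in cnbhd v).
Proof. by rewrite (@in_cnbhd (gjoin G H)) in_cnbhd. Qed.
Lemma join_rl (v : G) (w : H) : ((inr w : gjoin G H) \in cnbhd (inl v : gjoin G H)).
Proof. by rewrite (@in_cnbhd (gjoin G H)) orbT. Qed.
Lemma join_lr (v : H) (w : G) : ((inl w : gjoin G H) \in cnbhd (inr v : gjoin G H)).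
Proof. by rewrite (@in_cnbhd (gjoin G H)) orbT. Qed.

Lemma join_cntL (w' : G) (p : seq (gjoin G H)) :
  count (fun u : gjoin G H => (inl w' : gjoin G H) \in cnbhd u) p = cnt w' (lproj p) + size (rproj p).
Proof.
elim: p => [|[a|b] p IH] //=; rewrite /lproj /rproj /= in IH *; rewrite IH.
  by rewrite join_ll addnA.
by rewrite join_lr add1n addnS.
Qed.

Lemma join_cntR (w' : H) (p : seq (gjoin G H)) :
  count (fun u : gjoin G H => (inr w' : gjoin G H) \in cnbhd u) p = size (lproj p) + cnt w' (rproj p).
Proof.
elim: p => [|[a|b] p IH] //=; rewrite /lproj /rproj /= in IH *; rewrite IH.
  by rewrite join_rl addSn.
by rewrite join_rr /cnt /= addnCA.
Qed.

Lemma join_stepL (p : seq (gjoin G H)) (v : G) :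
  dns_step p (inl v : gjoin G H) <->
  (exists2 w', w' \in cnbhd v & cnt w' (lproj p) + size (rproj p) <= 1) \/
  (exists w', size (lproj p) + cnt w' (rproj p) <= 1).
Proof.
split => [/existsP [[w'|w'] /andP [hw hc]]|[[w' hw hc]|[w' hc]]].
- by left; exists w'; move: hw hc; rewrite join_cntL // join_ll.
- by right; exists w'; move: hc; rewrite join_cntR.
- by apply/existsP; exists (inl w'); rewrite join_cntL hc andbT join_ll.
- by apply/existsP; exists (inr w'); rewrite join_cntR hc andbT join_rl.
Qed.

Lemma join_lproj (S : seq (gjoin G H)) : is_dns S -> is_dns (lproj S).
Proof.
elim/last_ind: S => [|S x IH]; first by move=> _; exact: is_dns_nil.
rewrite is_dns_rcons lproj_rcons => /and3P [hS hx hst].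
case: x hx hst => [a|b] hx hst; last exact: IH.
rewrite is_dns_rcons IH //= -lproj_mem hx /=.
case/join_stepL: hst => [[w' hw hc]|[w' hc]].
  by apply/existsP; exists w'; rewrite hw /=; move: hc; rewrite /cnt; lia.
by apply: dns_small; lia.
Qed.
End Join.

Definition M (G H : sgraph) := maxn (gdns G + a_iso G) (gdns H + a_iso H).

Lemma join_swap_dns G H (S : seq (gjoin G H)) : @is_dns (gjoin H G) (map swap S) = is_dns S.
Proof. exact: (@iso_dns (gjoin G H) (gjoin H G) swap swap swapK swapK (@join_swap_adj G H)). Qed.

Lemma join_rproj G H (S : seq (gjoin G H)) : is_dns S -> is_dns (rproj S).
Proof. by rewrite -join_swap_dns -lproj_swap; apply: join_lproj. Qed.

Lemma last_inl G H (s : seq (gjoin G H)) (g : G) :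
  is_dns (rcons s (inl g : gjoin G H)) -> size (rcons s (inl g : gjoin G H)) <= M G H.
Proof.
move=> hd.
have hP : is_dns (rcons (lproj s) g) by have := join_lproj hd; rewrite lproj_rcons.
have hQ : is_dns (rproj s) by have := join_rproj hd; rewrite rproj_rcons.
move: (hd); rewrite is_dns_rcons => /and3P [_ _ hst].
rewrite size_rcons -size_proj /M.
have hGP := gdns_ub hP; rewrite size_rcons in hGP.
case: (posnP (size (rproj s))) => hq.
  by rewrite hq; apply: leq_trans (leq_maxl _ _); lia.
case/join_stepL: hst => [[w' hw hc]|[w' hc]].
  have h0 : cnt w' (rcons (lproj s) g) <= 1 by rewrite cnt_rcons hw; lia.
  have := sat1 hP h0; rewrite size_rcons => h1.
  apply: leq_trans (leq_maxl _ _); lia.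
case: (posnP (size (lproj s))) => hp.
  have h0 : cnt w' (rproj s) <= 1 by lia.
  have := sat1 hQ h0 => h1; apply: leq_trans (leq_maxr _ _); lia.
have h0 : cnt w' (rproj s) = 0 by lia.
have := sat0 hQ h0 => h1; apply: leq_trans (leq_maxr _ _); lia.
Qed.

Lemma ub_join G H (S : seq (gjoin G H)) : is_dns S -> size S <= M G H.
Proof.
case/lastP: S => [|s [g|h]] //; first exact: last_inl.
rewrite -join_swap_dns map_rcons /= => hd.
by have := last_inl hd; rewrite !size_rcons size_map /M maxnC.
Qed.

Lemma dns_joinL (G H : sgraph) (s : seq G) : is_dns s -> @is_dns (gjoin G H) (seqL H s).
Proof.
rewrite /seqL; elim/last_ind: s => [|s v IH]; first by move=> _; exact: is_dns_nil.
rewrite map_rcons !is_dns_rcons => /and3P [hs hv hst].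
rewrite IH // lproj_mem lproj_inl hv /=.
apply/join_stepL; left; case/existsP: hst => w' /andP [hw hc].
by exists w' => //; rewrite lproj_inl rproj_inl addn0.
Qed.

Lemma iso_cnt1 (G : sgraph) (s : seq G) (z : G) : uniq s -> [forall w, ~~ adj z w] -> cnt z s <= 1.
Proof.
move=> hu /forallP hz.
rewrite /cnt (eq_count (a2 := pred1 z)); first by rewrite (count_uniq_mem _ hu) leq_b1.
move=> u /=; rewrite in_cnbhd adj_sym (negbTE (hz u)) orbF.
by rewrite eq_sym.
Qed.

Lemma dns_joinL1 (G H : sgraph) (s : seq G) (h : H) : a_iso G = 1 -> is_dns s ->
  @is_dns (gjoin G H) (seqL H s ++ [:: inr h]).
Proof.
move=> ha hs; rewrite cats1 is_dns_rcons dns_joinL //= rproj_mem /seqL rproj_inl /=.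
rewrite -(@iso_step (gjoin G H) (gjoin H G) swap swap swapK swapK (@join_swap_adj G H)) /=.
move: ha; rewrite /a_iso; case: existsP => // -[z hz] _.
apply/join_stepL; right; exists z.
rewrite lproj_swap rproj_swap rproj_inl lproj_inl /= add0n.
by apply: iso_cnt1 => //; case/andP: hs.
Qed.

Lemma concl (G H : sgraph) (T : seq (gjoin G H)) : is_dns T -> size T = M G H ->
  is_mdns T /\ gdns (gjoin G H) = M G H.
Proof.
move=> hT hs.
have e : gdns (gjoin G H) = M G H.
  apply/eqP; rewrite eqn_leq -{2}hs gdns_ub // andbT.
  by case: (gdns_ex (gjoin G H)) => t [ht <-]; apply: ub_join.
by split => //; apply/mdnsE; rewrite e.
Qed.

Lemma swap_seqL (G H : sgraph) (s : seq H) : map swap (seqL G s) = seqR G s.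
Proof. by rewrite /seqL /seqR -map_comp. Qed.

Lemma aux0 (G H : sgraph) (SG : seq G) : is_dns SG -> size SG = gdns G ->
  gdns H + a_iso H <= gdns G + a_iso G -> a_iso G = 0 ->
  @is_mdns (gjoin G H) (seqL H SG) /\ gdns (gjoin G H) = M G H.
Proof.
move=> hd hs hle ha; apply: concl; first exact: dns_joinL.
by rewrite /seqL size_map hs /M; move: hle; rewrite ha; lia.
Qed.

Lemma aux1 (G H : sgraph) (SG : seq G) (h : H) : is_dns SG -> size SG = gdns G ->
  gdns H + a_iso H <= gdns G + a_iso G -> a_iso G = 1 ->
  @is_mdns (gjoin G H) (seqL H SG ++ [:: inr h]) /\ gdns (gjoin G H) = M G H.
Proof.
move=> hd hs hle ha; apply: concl; first exact: dns_joinL1.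
by rewrite size_cat /seqL size_map hs /M /=; move: hle; rewrite ha; lia.
Qed.

Lemma swapc (G H : sgraph) (T : seq (gjoin H G)) : is_mdns T /\ gdns (gjoin H G) = M H G ->
  @is_mdns (gjoin G H) (map swap T) /\ gdns (gjoin G H) = M G H.
Proof.
case=> /mdnsE [hT hs] e; apply: concl; first by rewrite join_swap_dns.
by rewrite size_map hs e /M maxnC.
Qed.

Theorem lemma4 (G H : sgraph) (SG : seq G) (SH : seq H) :
  0 < #|G| -> 0 < #|H| ->
  is_mdns SG -> is_mdns SH ->
  (* (1) *)
  (gdns (gsum G H) = gdns G + gdns H /\
   @is_mdns (gsum G H) (seqL H SG ++ seqR G SH)) /\
  (* (2) *)
  (gdns (gjoin G H) = maxn (gdns G + a_iso G) (gdns H + a_iso H) /\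
   (gdns H + a_iso H <= gdns G + a_iso G -> a_iso G = 0 ->
      @is_mdns (gjoin G H) (seqL H SG)) /\
   (gdns H + a_iso H <= gdns G + a_iso G -> a_iso G = 1 ->
      forall h : H, @is_mdns (gjoin G H) (seqL H SG ++ [:: inr h])) /\
   (gdns G + a_iso G < gdns H + a_iso H -> a_iso H = 0 ->
      @is_mdns (gjoin G H) (seqR G SH)) /\
   (gdns G + a_iso G < gdns H + a_iso H -> a_iso H = 1 ->
      forall g : G, @is_mdns (gjoin G H) (seqR G SH ++ [:: inl g]))).
Proof.
move=> hG hH /mdnsE [dG eG] /mdnsE [dH eH].
split.
  have hT : @is_dns (gsum G H) (seqL H SG ++ seqR G SH).
    by rewrite is_dns_sum /lproj /rproj !pmap_cat -/(lproj _) -/(lproj _) -/(rproj _) -/(rproj _)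
      /seqL /seqR lproj_inl lproj_inr rproj_inl rproj_inr cats0 dG dH.
  have hs : size (seqL H SG ++ seqR G SH) = gdns G + gdns H.
    by rewrite size_cat /seqL /seqR !size_map eG eH.
  have e : gdns (gsum G H) = gdns G + gdns H.
    apply/eqP; rewrite eqn_leq -{2}hs (gdns_ub hT) andbT.
    case: (gdns_ex (gsum G H)) => t [+ <-].
    rewrite is_dns_sum => /andP [h1 h2]; rewrite -size_proj.
    by apply: leq_add; apply: gdns_ub.
  by split => //; apply/mdnsE; rewrite e.
have hla := a_iso_le1 G; have hlb := a_iso_le1 H.
split.
  case: (leqP (gdns H + a_iso H) (gdns G + a_iso G)) => hle.
    case E: (a_iso G) hla => [|[|]] // _.
      by case: (aux0 (H:=H) dG eG hle E) => _ ->; rewrite /M; lia.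
    by case/card_gt0P: hH => h _; case: (aux1 h dG eG hle E) => _ ->; rewrite /M; lia.
  have hle' : gdns G + a_iso G <= gdns H + a_iso H by lia.
  case E: (a_iso H) hlb => [|[|]] // _.
    by case: (swapc (aux0 (H:=G) dH eH hle' E)) => _ ->; rewrite /M; lia.
  by case/card_gt0P: hG => g _; case: (swapc (aux1 g dH eH hle' E)) => _ ->; rewrite /M; lia.
split; first by move=> hle E; case: (aux0 (H:=H) dG eG hle E).
split; first by move=> hle E h; case: (aux1 h dG eG hle E).
have hl : gdns G + a_iso G < gdns H + a_iso H -> gdns G + a_iso G <= gdns H + a_iso H by lia.
split.
  move=> /hl hle E; case: (swapc (aux0 (H:=G) dH eH hle E)) => hm _.
  by rewrite -swap_seqL.
move=> /hl hle E g; case: (swapc (aux1 g dH eH hle E)) => hm _.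
by move: hm; rewrite map_cat swap_seqL.
Qed.
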